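(* Let $G$ be a median graph in $\mathcal{U}_3$ with $n\ge 3$ vertices and $v_0$ its unique vertex lying in every majority halfspace. If $u,v$ are vertices different from $v_0$ with $L_{v_0,u}\cap L_{v_0,v}=\emptyset$, then $v_0\in I(u,v)$, i.e. $d(u,v)=d(u,v_0)+d(v_0,v)$.
   Context: Graphs are finite, simple, connected, undirected; $d$ is shortest-path distance; $I(u,v)=\{x:d(u,x)+d(x,v)=d(u,v)\}$; a graph is median if every triple $x,y,z$ has $|I(x,y)\cap I(y,z)\cap I(z,x)|=1$. $\Theta$-classes: classes of the reflexive–transitive closure of the relation on edges ''opposite edges of a 4-cycle''; deleting a $\Theta$-class $E_i$ of a median graph leaves two components with vertex sets (halfspaces) $H_i',H_i''$. $\mathcal{U}_3$ is the family of median graphs with $n$ vertices in which every $\Theta$-class satisfies $\min\{|H_i'|,|H_i''|\}<n/3$; the larger halfspace is the majority halfspace. For $u\ne v$, the ladder set $L_{u,v}$ is the set of $\Theta$-classes $E_i$ such that $u,v$ lie in different halfspaces of $E_i$ and $u$ is an endpoint of an edge of $E_i$. *)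

(* Defs.v *)
From mathcomp Require Import all_boot.
Set Implicit Arguments. Unset Strict Implicit. Unset Printing Implicit Defensive.

Section Graph.
Variables (T : finType) (e : rel T).

Definition simple_graph : Prop := symmetric e /\ irreflexive e.
Definition connected_graph : Prop := forall x y : T, connect e x y.

Definition walkb (x y : T) (n : nat) : bool :=
  [exists p : n.-tuple T, path e x p && (last x p == y)].

(* shortest-path distance: least n with a walk of length n
   (in a connected graph always < #|T|) *)
Definition dist (x y : T) : nat := find (walkb x y) (iota 0 #|T|).

Definition interval (u v : T) : {set T} :=
  [set x | dist u x + dist x v == dist u v].

Definition median_graph : Prop :=
  forall x y z : T, #|interval x y :&: interval y z :&: interval z x| = 1.

(* oriented edges (a,b) and (c,d) are opposite edges of the 4-cycle a-b-d-c-a *)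
Definition opp_sq (p q : T * T) : bool :=
  [&& e p.1 p.2, e q.1 q.2, e p.1 q.1, e p.2 q.2 &
      uniq [:: p.1; p.2; q.1; q.2]].

(* one step of the Theta relation on oriented edges; reversing the orientation
   is included so that classes are classes of unoriented edges *)
Definition theta_step : rel (T * T) :=
  fun p q => ((q == (p.2, p.1)) && e p.1 p.2) || opp_sq p q.

Definition theta (p q : T * T) : bool := connect theta_step p q.

Definition halfspace (a b : T) : {set T} :=
  [set x | connect (fun y z => e y z && ~~ theta (a, b) (y, z)) a x].

(* (a,b) is an edge whose Theta-class lies in the ladder set L_{u,v}:
   u and v lie in different halfspaces of the class, and u is an endpoint
   of an edge of the class *)
Definition in_ladder (u v a b : T) : Prop :=
  e a b /\
  ((u \in halfspace a b /\ v \in halfspace b a) \/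
   (u \in halfspace b a /\ v \in halfspace a b)) /\
  exists x, e u x /\ theta (a, b) (u, x).

Definition in_U3 : Prop :=
  forall a b, e a b -> 3 * minn #|halfspace a b| #|halfspace b a| < #|T|.

Definition in_all_majority (w : T) : Prop :=
  forall a b, e a b -> #|halfspace b a| < #|halfspace a b| -> w \in halfspace a b.

End Graph.

(* Main.v *)
Require Import Defs.
From mathcomp Require Import all_boot.
From mathcomp Require Import zify.
Set Implicit Arguments. Unset Strict Implicit. Unset Printing Implicit Defensive.

Lemma connect_ind_pred (U : finType) (r : rel U) (P : U -> Prop) :
  (forall a b, P a -> r a b -> P b) -> forall a b, connect r a b -> P a -> P b.
Proof.
move=> H a b /connectP [p]; elim: p a => [|c p IH] a /=; first by move=> _ ->.
by move=> /andP [rac pp] lst Pa; exact: IH pp lst (H _ _ Pa rac).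
Qed.

Section S.
Variables (T : finType) (e : rel T).
Hypothesis (Hs : simple_graph e) (Hc : connected_graph e).

Let esym : symmetric e := proj1 Hs.
Let eirr : irreflexive e := proj2 Hs.

Fixpoint W (x y : T) (n : nat) : Prop :=
  match n with 0 => x = y | n'.+1 => exists z, e x z /\ W z y n' end.

Lemma walkbP x y n : walkb e x y n <-> W x y n.
Proof.
elim: n x => [|n IH] x /=.
  split; first by move=> /existsP [p]; rewrite (tuple0 p) /= => /eqP.
  by move=> ->; apply/existsP; exists [tuple]; rewrite /= eqxx.
split.
  move=> /existsP [p]; case: p / tupleP => z q /= /andP [/andP [exz pq] lq].
  by exists z; split => //; apply/IH; apply/existsP; exists q; rewrite pq lq.
move=> [z [exz /IH /existsP [q /andP [pq lq]]]]; apply/existsP.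
by exists [tuple of z :: q]; rewrite /= exz pq.
Qed.

Lemma W_cat x y z m n : W x y m -> W y z n -> W x z (m + n).
Proof.
elim: m x => [|m IH] x /=; first by move=> ->.
by move=> [w [exw Hw]] Hy; exists w; split=> //; exact: IH Hy.
Qed.

Lemma W_snoc x y z n : W x y n -> e y z -> W x z n.+1.
Proof.
elim: n x => [|n IH] x /=; first by move=> -> eyz; exists z.
by move=> [w [exw Hw]] eyz; exists w; split => //; exact: IH.
Qed.

Lemma W_sym x y n : W x y n -> W y x n.
Proof.
elim: n x y => [|n IH] x y /=; first by move=> ->.
by move=> [z [exz Hz]]; apply: W_snoc (IH _ _ Hz) _; rewrite esym.
Qed.

Lemma path_W x p : path e x p -> W x (last x p) (size p).
Proof.
elim: p x => [|z p IH] x //= /andP [exz pp]; exists z; split => //; exact: IH.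
Qed.

Lemma W_exists x y : exists n, n < #|T| /\ W x y n.
Proof.
have := Hc x y; move=> /connectP [p pp ->].
case/shortenP: pp => p' pp' up' _.
exists (size p'); split; last exact: path_W.
have := max_card (mem (x :: p')); rewrite (card_uniqP up') /=; lia.
Qed.

Local Notation d := (dist e).

Lemma has_walk x y : has (walkb e x y) (iota 0 #|T|).
Proof.
have [n [hn hw]] := W_exists x y.
by apply/hasP; exists n; [rewrite mem_iota; lia | apply/walkbP].
Qed.

Lemma dist_lt x y : d x y < #|T|.
Proof. by have := has_walk x y; rewrite has_find size_iota. Qed.

Lemma dist_W x y : W x y (d x y).
Proof.
have := nth_find 0 (has_walk x y); rewrite nth_iota ?dist_lt // add0n.
by move/walkbP.
Qed.

Lemma dist_min x y n : W x y n -> d x y <= n.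
Proof.
move=> hw; case: (ltnP n #|T|) => hn; last by have := dist_lt x y; lia.
rewrite leqNgt; apply/negP => hlt.
have := before_find 0 hlt; rewrite nth_iota // add0n => /negbT /negP; apply.
by apply/walkbP.
Qed.

Lemma d0 x y : d x y = 0 -> x = y.
Proof. by move=> h; have := dist_W x y; rewrite h. Qed.

Lemma d_refl x : d x x = 0.
Proof. by have := @dist_min x x 0 erefl; lia. Qed.

Lemma d_edge x y : e x y -> d x y = 1.
Proof.
move=> exy; have h1 : d x y <= 1 by apply: dist_min; exists y.
case E: (d x y) => [|k]; last by lia.
by move/d0: E => E; rewrite E eirr in exy.
Qed.

Lemma dist_one x y : d x y = 1 -> e x y.
Proof. by move=> h; have := dist_W x y; rewrite h /= => [[z [? <-]]]. Qed.

Lemma d_tri x y z : d x z <= d x y + d y z.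
Proof. apply: dist_min; apply: W_cat; apply: dist_W. Qed.

Lemma d_sym x y : d x y = d y x.
Proof.
apply/eqP; rewrite eqn_leq; apply/andP; split; apply: dist_min; apply: W_sym;
  apply: dist_W.
Qed.

Lemma geo x y k : d x y = k.+1 -> exists z, e x z /\ d z y = k.
Proof.
move=> h; have := dist_W x y; rewrite h /= => [[z [exz hz]]].
exists z; split => //; have := dist_min hz; have := d_tri x z y.
rewrite (d_edge exz); lia.
Qed.

Hypothesis Hm : median_graph e.

Lemma bip w a b : e a b -> d w a <> d w b.
Proof.
move=> eab Heq; have := Hm w a b.
case: (set_0Vmem (interval e w a :&: interval e a b :&: interval e b w))
  => [->|[m]]; first by rewrite cards0.
rewrite !inE => /andP [/andP [/eqP h1 /eqP h2] /eqP h3] _.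
rewrite (d_edge eab) in h2.
case E: (d a m) => [|k].
  move/d0: E => E; subst m.
  by move: h3; rewrite d_sym (d_edge eab) (d_sym b w) (d_sym a w); lia.
have E2 : d m b = 0 by lia.
move/d0: E2 => E2; subst m.
by move: h1; rewrite (d_sym b a) (d_edge eab); lia.
Qed.

Lemma edge_facts w s t : e s t ->
  d w s <> d w t /\ d w t <= d w s + 1 /\ d w s <= d w t + 1.
Proof.
move=> est; split; first exact: bip.
have := d_tri w s t; have := d_tri w t s; have := d_edge est; have : d t s = 1 by rewrite d_sym d_edge.
move=> *; split; lia.
Qed.

Lemma ntc w a b c d' : e a b -> e b c -> e a d' -> e d' c -> b != d' -> a != c ->
  ~ (d w b < d w a /\ d w b < d w c /\ d w d' < d w a /\ d w d' < d w c).
Proof.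
move=> eab ebc ead edc nbd nac [h1 [h2 [h3 h4]]].
have := edge_facts w eab; have := edge_facts w ebc => f1 f2.
have dac : d a c = 2.
  have := d_tri a b c; rewrite (d_edge eab) (d_edge ebc) => le.
  have ne0 : d a c <> 0 by move/d0 => E; rewrite E eqxx in nac.
  have ne1 : d a c <> 1 by move/dist_one => eac; have := edge_facts w eac; lia.
  lia.
have inI z : e a z -> e z c -> d w z < d w a -> d w z < d w c ->
    z \in interval e a c :&: interval e c w :&: interval e w a.
  move=> eaz ezc hza hzc; have := edge_facts w eaz; have := edge_facts w ezc.
  have g1 := d_edge eaz; have g2 := d_edge ezc.
  have g3 : d c z = 1 by rewrite d_sym.
  have g4 : d z a = 1 by rewrite d_sym.
  have g5 := d_sym z w; have g6 := d_sym c w => f3 f4.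
  rewrite !inE; apply/andP; split; [apply/andP; split|]; apply/eqP; lia.
have sub : [set b; d'] \subset interval e a c :&: interval e c w :&: interval e w a.
  apply/subsetP => z /set2P [] ->; apply: inI => //.
have := subset_leq_card sub; rewrite cards2 nbd Hm; lia.
Qed.

Lemma Vlem x v0 s : e x v0 -> d v0 s = d x s + 1 \/ d x s = d v0 s + 1.
Proof. move=> exv; have := edge_facts s exv; rewrite (d_sym s x) (d_sym s v0); lia. Qed.

Lemma Exlem x s t : e s t -> d x t = d x s + 1 \/ d x s = d x t + 1.
Proof. by move=> est; have := edge_facts x est; lia. Qed.

Lemma theta_inv x v0 : e x v0 -> forall p q, theta e (x, v0) (p, q) ->
  (d x p < d v0 p) != (d x q < d v0 q).
Proof.
move=> exv p q ht.
pose P (pq : T * T) := (d x pq.1 < d v0 pq.1) != (d x pq.2 < d v0 pq.2).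
apply: (@connect_ind_pred _ _ P _ _ _ ht); last first.
  by rewrite /P /= d_refl (d_edge exv) d_sym (d_edge exv) d_refl.
move=> [p1 p2] [q1 q2]; rewrite /P /= => Pa /orP [].
  by move=> /andP [/eqP [-> ->] _]; rewrite eq_sym.
move=> /and5P [/= e12 eq12 e1q1 e2q2 hu].
move: hu => /= /andP [hu1 /andP [hu2 _]].
have n1 : p1 != q2 by apply: contraNneq hu1 => ->; rewrite !inE eqxx ?orbT.
have n2 : p2 != q1 by apply: contraNneq hu2 => ->; rewrite !inE eqxx ?orbT.
have e21 : e p2 p1 by rewrite esym.
have eq21 : e q2 q1 by rewrite esym.
have eq1p1 : e q1 p1 by rewrite esym.
have eq2p2 : e q2 p2 by rewrite esym.
have A1 := ntc (w:=x) e12 e2q2 e1q1 eq12 n2 n1.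
have A2 := ntc (w:=v0) e12 e2q2 e1q1 eq12 n2 n1.
have A3 := ntc (w:=x) e21 e1q1 e2q2 eq21 n1 n2.
have A4 := ntc (w:=v0) e21 e1q1 e2q2 eq21 n1 n2.
have V s := Vlem s exv.
have Ex s t (est : e s t) := Exlem x est.
have X1 := Ex _ _ e12; have X2 := Ex _ _ eq12.
have X3 := Ex _ _ e1q1; have X4 := Ex _ _ e2q2.
have X5 := Exlem v0 e12; have X6 := Exlem v0 eq12.
have X7 := Exlem v0 e1q1; have X8 := Exlem v0 e2q2.
have L1 m : (m < m + 1) = true by clear; lia.
have L2 m : (m + 1 < m) = false by clear; lia.
case: (V p1) => h1; case: (V p2) => h2; case: (V q1) => h3; case: (V q2) => h4;
  rewrite h1 h2 h3 h4 ?L1 ?L2 in A1 A2 A3 A4 X1 X2 X3 X4 X5 X6 X7 X8 Pa * => //;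
  exfalso; case: X1 => Y1; case: X2 => Y2; case: X3 => Y3; case: X4 => Y4;
  case: X5 => Y5; case: X6 => Y6; case: X7 => Y7; case: X8 => Y8;
  clear -A1 A2 A3 A4 Y1 Y2 Y3 Y4 Y5 Y6 Y7 Y8; lia.
Qed.

Lemma reach x v0 : e x v0 -> forall n w, d x w = n -> d v0 w = d x w + 1 ->
  connect (fun y z => e y z && ~~ theta e (x, v0) (y, z)) x w.
Proof.
move=> exv n; elim: n => [|n IH] w h1 h2.
  by move/d0: h1 => ->; exact: connect0.
have := geo (etrans (d_sym w x) h1) => [[z [ewz hz]]].
have hz' : d x z = n by rewrite d_sym.
have ezw : e z w by rewrite esym.
have := edge_facts v0 ezw; have := d_tri v0 x z; have s1 : d v0 x = 1 by rewrite d_sym d_edge.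
move=> t f.
have hv : d v0 z = d x z + 1 by lia.
apply: connect_trans (IH z hz' hv) (connect1 _).
rewrite ezw /=; apply/negP => /(theta_inv exv).
have -> : d x z < d v0 z by lia.
by have -> : d x w < d v0 w by lia.
Qed.

Lemma ladder v0 u x : e v0 x -> d v0 u = d x u + 1 -> in_ladder e v0 u v0 x.
Proof.
move=> evx h; split => //; split; last by exists x; split => //; exact: connect0.
left; split; first by rewrite inE connect0.
rewrite inE; apply: (reach _ erefl) => //; by rewrite esym.
Qed.

End S.

Theorem mainTheorem12 (T : finType) (e : rel T) (v0 u v : T) :
  simple_graph e -> connected_graph e -> median_graph e -> in_U3 e ->
  3 <= #|T| ->
  in_all_majority e v0 ->
  (forall w, in_all_majority e w -> w = v0) ->
  u != v0 -> v != v0 ->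
  (forall a b, ~ (in_ladder e v0 u a b /\ in_ladder e v0 v a b)) ->
  v0 \in interval e u v.
Proof.
move=> Hs Hc Hm _ _ _ _ _ _ Hl; apply/negPn/negP => Hnot.
case: (set_0Vmem (interval e u v :&: interval e v v0 :&: interval e v0 u))
  => [H0|[m]]; first by have := Hm u v v0; rewrite H0 cards0.
rewrite !inE => /andP [/andP [/eqP Iuv /eqP Ivv0] /eqP Iv0u].
case E: (dist e v0 m) => [|k].
  move/(d0 Hc): E => E; subst m; move/negP: Hnot; apply; rewrite inE; apply/eqP.
  lia.
have [x [evx hx]] := geo Hs Hc E.
have t1 := d_tri Hc x m u; have t2 := d_tri Hc v0 x u.
have t3 := d_tri Hc x m v; have t4 := d_tri Hc v0 x v.
have s1 := d_sym Hs Hc m v; have s2 := d_sym Hs Hc m v0; have s3 := d_sym Hs Hc v v0.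
have s4 := d_edge Hs Hc evx.
apply: (Hl v0 x); split; apply: ladder => //; lia.
Qed.
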